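(* Let $\kappa$ be a gravitational lens satisfying the conditions in the context, and let $\alpha(x)=\frac{2}{x}\int_0^x\kappa(t)\,t\,dt$ for $x>0$ be its normalized deflection angle. An Einstein ring is a radius $x_E>0$ with $\alpha(x_E)=x_E$. Then at least one Einstein ring exists if and only if $\kappa(0)>1$ (where $\kappa(0)=+\infty$ for singular lenses).
   Context: A gravitational lens (in a single lens plane) is given by a normalized surface density $\kappa$ on the plane $\mathbb{R}^2$ satisfying: (i) Continuity: $\kappa:\mathbb{R}^2\to[0,\infty)$ is continuous, except possibly at the origin for singular lenses. (ii) Circular symmetry: $\kappa$ depends only on the radius $x=\|\mathbf{x}\|$; write $\kappa=\kappa(x)$. (iii) Finiteness: $\kappa(x)<\infty$ for $x>0$; $\kappa(0)=1/C_1$ for a constant $C_1\ge 0$ (so $\kappa(0)=+\infty$ when $C_1=0$); and $\lim_{x\to\infty}\kappa(x)\,x=C_2$ for a constant $0\le C_2<\infty$. (iv) Self-gravitation: $\kappa(x)<\bar\kappa(x)$ for $x>0$, where $\bar\kappa(x)=\frac{2}{x^2}\int_0^x\kappa(t)\,t\,dt$. The lens is called singular if and only if $C_1=0$, and non-singular otherwise. The deflection angle $\alpha$ is the radial derivative of the lensing potential $f$ solving $\Delta f=2\kappa$ (with deflection vanishing as small as possible at infinity), which for a circularly symmetric lens is $\alpha(x)=\frac{2}{x}\int_0^x\kappa(t)\,t\,dt$. *)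

(* Defs.v *)
From Stdlib Require Import Reals.
From Coquelicot Require Import Coquelicot.
Open Scope R_scope.

(* A circularly symmetric lens is described by its radial profile
   kappa : R -> R (only its values on [0, +oo) matter) and the constant C1. *)

Definition mass (kappa : R -> R) (x : R) : R :=
  RInt_gen (fun t => kappa t * t) (at_right 0) (at_point x).

Definition kbar (kappa : R -> R) (x : R) : R := 2 / (x ^ 2) * mass kappa x.

Definition alpha (kappa : R -> R) (x : R) : R := 2 / x * mass kappa x.

Definition kappa0 (C1 : R) : Rbar :=
  match Req_EM_T C1 0 with
  | left _ => p_infty
  | right _ => Finite (/ C1)
  end.

Definition is_lens (kappa : R -> R) (C1 : R) : Prop :=
  (forall x, 0 < x -> 0 <= kappa x) /\
  (forall x, 0 < x -> continuous kappa x) /\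
  0 <= C1 /\
  (0 < C1 -> kappa 0 = / C1 /\ filterlim kappa (at_right 0) (locally (/ C1))) /\
  (C1 = 0 -> filterlim kappa (at_right 0) (Rbar_locally p_infty)) /\
  (exists C2, 0 <= C2 /\
     filterlim (fun x => kappa x * x) (Rbar_locally p_infty) (locally C2)) /\
  (* the mass integral is finite (needed for kbar and alpha to make sense) *)
  (forall x, 0 < x -> ex_RInt_gen (fun t => kappa t * t) (at_right 0) (at_point x)) /\
  (forall x, 0 < x -> kappa x < kbar kappa x).

Definition einstein_ring (kappa : R -> R) (xE : R) : Prop :=
  0 < xE /\ alpha kappa xE = xE.

(* Main.v *)
Require Import Defs.
From Stdlib Require Import Reals Lra Psatz.
From Coquelicot Require Import Coquelicot.
Open Scope R_scope.

Lemma at_right0_ex (P : R -> Prop) :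
  at_right 0 P -> exists d, 0 < d /\ forall t, 0 < t < d -> P t.
Proof.
  intros [d Hd]. exists d. split. apply cond_pos.
  intros t Ht. apply Hd; [|lra].
  unfold ball; simpl; unfold AbsRing_ball, minus, plus, opp; simpl.
  rewrite ?Ropp_0, ?Rplus_0_r, Rabs_pos_eq; lra.
Qed.

Lemma at_right0_intro (P : R -> Prop) d :
  0 < d -> (forall t, 0 < t < d -> P t) -> at_right 0 P.
Proof.
  intros Hd H. exists (mkposreal d Hd). intros t Hb Ht. apply H. split; [lra|].
  unfold ball in Hb; simpl in Hb; unfold AbsRing_ball, minus, plus, opp in Hb; simpl in Hb.
  rewrite ?Ropp_0, ?Rplus_0_r, Rabs_pos_eq in Hb; lra.
Qed.

Lemma RInt_lin c a b : RInt (fun t => c * t) a b = c * b^2/2 - c * a^2/2.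
Proof.
  apply (is_RInt_unique (V:=R_CompleteNormedModule)).
  assert (H : is_RInt (fun t => c * t) a b (minus (c * b^2/2) (c * a^2/2))).
  { apply (is_RInt_derive (V:=R_CompleteNormedModule) (fun t => c * t^2/2)).
    - intros x _. auto_derive; auto; field.
    - intros x _. apply (continuous_mult (fun _ => c) (fun t => t)); [apply continuous_const | apply continuous_id]. }
  exact H.
Qed.

Lemma ex_lin c a b : ex_RInt (fun t => c * t) a b.
Proof. eexists. apply (RInt_correct (V:=R_CompleteNormedModule)).
  apply (ex_RInt_continuous (V:=R_CompleteNormedModule)). intros.
  apply (continuous_mult (fun _ => c) (fun t => t)); [apply continuous_const | apply continuous_id]. Qed.

Lemma is_RInt_gen_lin c x : 0 < x ->
  is_RInt_gen (fun t => c * t) (at_right 0) (at_point x) (c * x^2/2).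
Proof.
  intros Hx.
  assert (HD : forall t, Derive (fun t => c * t^2/2) t = c * t).
  { intros t. apply is_derive_unique. auto_derive; auto. change (c * (1 * ((1 + 1) * (t * 1))) * / 2 = c * t). field. }
  apply (is_RInt_gen_ext (Derive (fun t => c * t^2/2))).
  - apply (Filter_prod _ _ _ (fun _ => True) (fun _ => True)); try apply filter_true.
    intros. apply HD.
  - replace (c * x^2/2) with (c * x^2/2 - c * 0^2/2) by (simpl; field).
    apply (is_RInt_gen_Derive (Fa := at_right 0) (Fb := at_point x)).
    + apply (Filter_prod _ _ _ (fun _ => True) (fun _ => True)); try apply filter_true.
      intros. eexists. auto_derive; auto.
    + apply (Filter_prod _ _ _ (fun _ => True) (fun _ => True)); try apply filter_true.
      intros a b _ _ t _. apply (continuous_ext (fun t => c * t)). intros; rewrite HD; auto.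
      apply (continuous_mult (fun _ => c) (fun t => t)); [apply continuous_const | apply continuous_id].
    + apply (filterlim_filter_le_1 (F := locally 0)). apply filter_le_within.
      apply (ex_derive_continuous (fun t => c * t^2/2)). eexists; auto_derive; auto.
    + intros P HP. apply locally_singleton in HP. exact HP.
Qed.

Section S.
Variable kappa : R -> R.
Let f := fun t => kappa t * t.
Hypothesis Hpos : forall x, 0 < x -> 0 <= kappa x.
Hypothesis Hcont : forall x, 0 < x -> continuous kappa x.
Hypothesis Hex : forall x, 0 < x -> ex_RInt_gen f (at_right 0) (at_point x).
Hypothesis Hsg : forall x, 0 < x -> kappa x < kbar kappa x.

Lemma fcont x : 0 < x -> continuous f x.
Proof. intros. unfold f. apply (continuous_mult kappa (fun t => t)); auto.
  apply continuous_id. Qed.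

Lemma ex_f a b : 0 < a -> 0 < b -> ex_RInt f a b.
Proof. intros. apply (ex_RInt_continuous (V:=R_CompleteNormedModule)). intros z Hz. apply fcont.
  destruct (Rle_dec a b); [rewrite Rmin_left in Hz | rewrite Rmin_right in Hz]; lra. Qed.

Lemma chasles a b : 0 < a -> 0 < b -> mass kappa b = mass kappa a + RInt f a b.
Proof.
  intros Ha Hb. unfold mass. fold f.
  rewrite <- (RInt_gen_at_point f a b) by (apply ex_f; auto).
  symmetry. apply (RInt_gen_Chasles (Fa := at_right 0) (Fc := at_point b) f a).
  apply Hex; auto. apply ex_RInt_gen_at_point. apply ex_f; auto.
Qed.

Lemma mass_pos x : 0 < x -> 0 < mass kappa x.
Proof.
  intros Hx. pose proof (Hsg x Hx). pose proof (Hpos x Hx). unfold kbar in H.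
  assert (0 < 2 / x^2 * mass kappa x) by lra.
  assert (0 < 2 / x^2) by (apply Rdiv_lt_0_compat; nra).
  destruct (Rlt_dec 0 (mass kappa x)); auto.
  assert (2 / x^2 * mass kappa x <= 0). { apply Rmult_le_0_l; lra. } lra.
Qed.

Lemma locally_pos x : 0 < x -> locally x (fun t => 0 < t).
Proof.
  intros Hx. exists (mkposreal (x/2) ltac:(lra)). intros t Ht.
  unfold ball in Ht; simpl in Ht; unfold AbsRing_ball, minus, plus, opp in Ht; simpl in Ht.
  apply Rabs_def2 in Ht. lra.
Qed.

Lemma mass_deriv x : 0 < x -> is_derive (mass kappa) x (f x).
Proof.
  intros Hx.
  apply (is_derive_ext_loc (fun y => mass kappa (x/2) + RInt f (x/2) y)).
  - apply (filter_imp (fun t => 0 < t)); [|apply locally_pos; auto].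
    intros t Ht. symmetry. apply chasles; lra.
  - assert (H : is_derive (fun y => mass kappa (x/2) + RInt f (x/2) y) x (plus zero (f x))).
    { apply (is_derive_plus (fun _ => mass kappa (x/2)) (fun y => RInt f (x/2) y)).
      first [exact (is_derive_const (mass kappa (x/2)) x) | exact (@is_derive_const R_AbsRing R_NormedModule (mass kappa (x/2)) x)].
      apply (is_derive_RInt f (RInt f (x/2)) (x/2) x).
      apply (filter_imp (fun t => 0 < t)); [|apply locally_pos; auto].
      intros t Ht. apply (RInt_correct (V:=R_CompleteNormedModule)). apply ex_f; lra.
      apply fcont; auto. }
    rewrite plus_zero_l in H. exact H.
Qed.

Definition u x := mass kappa x / x^2.

Lemma u_deriv x : 0 < x ->
  is_derive u x ((f x * x^2 - mass kappa x * (2*x)) / (x^2)^2).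
Proof.
  intros Hx. unfold u.
  apply (is_derive_div (mass kappa) (fun t => t^2)).
  apply mass_deriv; auto.
  auto_derive; auto; ring.
  apply pow_nonzero; lra.
Qed.

Lemma u_cont x : 0 < x -> continuity_pt u x.
Proof.
  intros Hx. apply continuity_pt_filterlim.
  apply (ex_derive_continuous u). eexists. apply u_deriv; auto.
Qed.

Lemma u_decr a b : 0 < a -> a < b -> u b < u a.
Proof.
  intros Ha Hab.
  destruct (MVT_gen u a b (fun x => (f x * x^2 - mass kappa x * (2*x)) / (x^2)^2)) as [c [Hc Heq]].
  - rewrite Rmin_left, Rmax_right by lra. intros x Hx. apply u_deriv; lra.
  - rewrite Rmin_left, Rmax_right by lra. intros x Hx. apply u_cont; lra.
  - rewrite Rmin_left, Rmax_right in Hc by lra.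
    assert (Hc0 : 0 < c) by lra.
    pose proof (Hsg c Hc0) as H. unfold kbar in H.
    assert (Hn : f c * c^2 - mass kappa c * (2*c) < 0).
    { unfold f. assert (kappa c * c^2 < 2 * mass kappa c).
      { replace (2 * mass kappa c) with ((2 / c^2 * mass kappa c) * c^2) by (field; lra).
        apply Rmult_lt_compat_r; [nra|lra]. }
      nra. }
    assert (0 < (c^2)^2) by (apply pow_lt; nra).
    assert ((f c * c^2 - mass kappa c * (2*c)) / (c^2)^2 < 0).
    { unfold Rdiv. apply Rmult_neg_pos; auto. apply Rinv_0_lt_compat; auto. }
    nra.
Qed.

Lemma mass_ub x c : 0 < x -> (forall t, 0 < t <= x -> kappa t <= c) ->
  mass kappa x <= c * x^2/2.
Proof.
  intros Hx Hc.
  pose proof (RInt_gen_correct (V:=R_CompleteNormedModule) (Fa:=at_right 0) (Fb:=at_point x) f (Hex x Hx)) as Hl.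
  pose proof (is_RInt_gen_lin c x Hx) as Hg.
  assert (HP : filter_prod (at_right 0) (at_point x) (fun ab : R * R => 0 < fst ab < x /\ snd ab = x)).
  { apply (Filter_prod _ _ _ (fun a => 0 < a < x) (fun b => b = x)).
    apply (at_right0_intro _ x Hx). auto. reflexivity. simpl; auto. }
  assert (H1 : filter_prod (at_right 0) (at_point x) (fun ab : R * R => fst ab <= snd ab)).
  { eapply filter_imp; [|exact HP]. intros [a b] [? ?]; simpl in *; lra. }
  assert (H2 : filter_prod (at_right 0) (at_point x) (fun ab : R * R =>
     forall t, fst ab <= t <= snd ab -> Rabs (f t) <= c * t)).
  { eapply filter_imp; [|exact HP]. intros [a b] [? ?] t Ht; simpl in *.
    unfold f. rewrite Rabs_pos_eq.
    - apply Rmult_le_compat_r; [lra|apply Hc; lra].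
    - apply Rmult_le_pos; [apply Hpos|]; lra. }
  pose proof (@RInt_gen_norm R_CompleteNormedModule (at_right 0) (at_point x) _ _
     f (fun t => c * t) _ _ H1 H2 Hl Hg) as H.
  change (Rabs (mass kappa x) <= c * x^2/2) in H.
  eapply Rle_trans; [apply Rle_abs|exact H].
Qed.

Lemma mass_lb a b c : 0 < a -> a < b -> (forall t, a < t < b -> c <= kappa t) ->
  mass kappa a + (c * b^2/2 - c * a^2/2) <= mass kappa b.
Proof.
  intros Ha Hab Hc. rewrite (chasles a b) by lra.
  apply Rplus_le_compat_l. rewrite <- RInt_lin.
  apply RInt_le. lra. apply ex_lin. apply ex_f; lra.
  intros t Ht. unfold f. apply Rmult_le_compat_r; [lra|apply Hc; lra].
Qed.

Lemma mass_far A x K : 0 < A -> A < x -> (forall t, A < t < x -> f t <= K) ->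
  mass kappa x <= mass kappa A + K * (x - A).
Proof.
  intros HA Hx HK. rewrite (chasles A x) by lra.
  apply Rplus_le_compat_l.
  replace (K * (x - A)) with (RInt (fun _ => K) A x).
  apply RInt_le. lra. apply ex_f; lra.
  apply (ex_RInt_continuous (V:=R_CompleteNormedModule)). intros; apply continuous_const.
  auto.
  rewrite RInt_const. unfold scal; simpl; unfold mult; simpl. ring.
Qed.

End S.

Lemma ball_R (a e b : R) : ball a e b -> Rabs (b - a) < e.
Proof. intros H. exact H. Qed.

Theorem theorem1 (kappa : R -> R) (C1 : R) :
  is_lens kappa C1 ->
  ((exists xE, einstein_ring kappa xE) <-> Rbar_lt (Finite 1) (kappa0 C1)).
Proof.
  intros [Hpos [Hcont [HC1 [Hfin [Hsing [[C2 [HC2 Hinf]] [Hex Hsg]]]]]]].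
  pose proof (u_decr kappa Hcont Hex Hsg) as Hdec.
  pose proof (mass_ub kappa Hpos Hex) as Hub.
  pose proof (mass_lb kappa Hcont Hex) as Hlb.
  pose proof (mass_far kappa Hcont Hex) as Hfar.
  pose proof (mass_pos kappa Hpos Hsg) as Hmp.
  split.
  - intros [xE [HxE Ha]]. unfold kappa0. destruct (Req_EM_T C1 0) as [e|n]; simpl; auto.
    assert (HC : 0 < C1) by lra. destruct (Hfin HC) as [_ Hl].
    destruct (Rlt_le_dec 1 (/ C1)) as [ok|bad]; auto. exfalso.
    unfold alpha in Ha.
    assert (Hm : mass kappa xE = xE^2/2).
    { replace (mass kappa xE) with ((2 / xE * mass kappa xE) * xE / 2) by (field; lra).
      rewrite Ha. field. }
    set (y := xE/2).
    assert (Hy : u kappa xE < u kappa y) by (apply Hdec; unfold y; lra).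
    assert (HuE : u kappa xE = 1/2) by (unfold u; rewrite Hm; field; lra).
    set (c := (1 + 2 * u kappa y)/2).
    assert (He : 0 < c - / C1) by (unfold c; lra).
    pose proof (Hl (ball (/C1) (mkposreal _ He)) (locally_ball _ _)) as Hb.
    apply at_right0_ex in Hb. destruct Hb as [d [Hd Hb]].
    set (x := Rmin d y / 2).
    assert (Hx0 : 0 < x) by (unfold x, y, Rmin; destruct Rle_dec; lra).
    assert (Hxd : x < d) by (unfold x; pose proof (Rmin_l d y); lra).
    assert (Hxy : x < y) by (unfold x; pose proof (Rmin_r d y); unfold y in *; lra).
    assert (Hmx : mass kappa x <= c * x^2/2).
    { apply Hub; auto. intros t Ht. pose proof (ball_R _ _ _ (Hb t ltac:(lra))) as Hr.
      simpl in Hr. apply Rabs_def2 in Hr. lra. }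
    assert (u kappa x <= c / 2).
    { unfold u. apply (Rmult_le_reg_r (x^2)). apply pow_lt; lra.
      replace (mass kappa x / x ^ 2 * x ^ 2) with (mass kappa x) by (field; lra). lra. }
    pose proof (Hdec x y Hx0 Hxy). unfold c in *. lra.
  - intros H.
    assert (Hc : exists c d, 1 < c /\ 0 < d /\ forall t, 0 < t < d -> c <= kappa t).
    { unfold kappa0 in H. destruct (Req_EM_T C1 0) as [e|n].
      - pose proof (Hsing e (fun y => 2 < y) (ex_intro _ 2 (fun x Hx => Hx))) as Hb.
        apply at_right0_ex in Hb. destruct Hb as [d [Hd Hb]].
        exists 2, d. split; [lra|split; auto]. intros t Ht. left. apply Hb; auto.
      - simpl in H. assert (HC : 0 < C1) by lra. destruct (Hfin HC) as [_ Hl].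
        assert (He : 0 < (/C1 - 1)/2) by lra.
        pose proof (Hl (ball (/C1) (mkposreal _ He)) (locally_ball _ _)) as Hb.
        apply at_right0_ex in Hb. destruct Hb as [d [Hd Hb]].
        exists ((1 + /C1)/2), d. split; [lra|split; auto]. intros t Ht.
        pose proof (ball_R _ _ _ (Hb t Ht)) as Hr. simpl in Hr. apply Rabs_def2 in Hr. lra. }
    destruct Hc as [c [d [Hc1 [Hd Hcd]]]].
    set (eps := Rmin (1/2) ((c-1)/(2*c))).
    assert (He1 : eps <= 1/2) by apply Rmin_l.
    assert (He2 : eps <= (c-1)/(2*c)) by apply Rmin_r.
    assert (He0 : 0 < eps).
    { unfold eps, Rmin. destruct Rle_dec; [lra|]. apply Rdiv_lt_0_compat; lra. }
    assert (Hce : c * eps <= (c-1)/2).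
    { replace ((c-1)/2) with (c * ((c-1)/(2*c))) by (field; lra).
      apply Rmult_le_compat_l; lra. }
    set (x1 := d/2).
    assert (Hx1 : x1^2/2 < mass kappa x1).
    { pose proof (Hlb (eps * x1) x1 c ltac:(unfold x1; nra) ltac:(unfold x1; nra)
        ltac:(intros t Ht; apply Hcd; unfold x1 in *; nra)) as Hl1.
      pose proof (Hmp (eps * x1) ltac:(unfold x1; nra)).
      assert (0 < x1) by (unfold x1; lra).
      assert (c * eps * eps <= (c-1)/2 * eps) by (apply Rmult_le_compat_r; lra).
      assert ((c-1)/2 * eps <= (c-1)/2) by nra.
      assert (c*(eps*x1)^2/2 <= (c-1)/2 * x1^2/2).
      { replace (c*(eps*x1)^2/2) with ((c*eps*eps) * (x1^2/2)) by field. 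
        replace ((c-1)/2 * x1^2/2) with ((c-1)/2 * (x1^2/2)) by field.
        apply Rmult_le_compat_r; nra. }
      nra. }
    assert (Hd1 : 0 < 1) by lra.
    pose proof (Hinf (ball C2 (mkposreal _ Hd1)) (locally_ball _ _)) as [M HM].
    set (A := Rmax M 1).
    assert (HA : 0 < A) by (unfold A; pose proof (Rmax_r M 1); lra).
    set (K := C2 + 1).
    set (X := Rmax (A + x1 + 1) (2 * (K + Rabs (mass kappa A) + 1))).
    assert (HX1 : A + x1 + 1 <= X) by apply Rmax_l.
    assert (HX2 : 2 * (K + Rabs (mass kappa A) + 1) <= X) by apply Rmax_r.
    assert (Hx10 : 0 < x1) by (unfold x1; lra).
    assert (HmX : mass kappa X <= mass kappa A + K * (X - A)).
    { apply Hfar; try lra. intros t Ht.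
      pose proof (ball_R _ _ _ (HM t ltac:(unfold A in *; pose proof (Rmax_l M 1); lra))) as Hr.
      simpl in Hr. apply Rabs_def2 in Hr. unfold K. lra. }
    assert (HXg : mass kappa X < X^2/2).
    { pose proof (Rle_abs (mass kappa A)). pose proof (Rabs_pos (mass kappa A)).
      assert (X^2/2 >= X * (K + Rabs (mass kappa A) + 1)) by nra.
      unfold K in *. nra. }
    destruct (Ranalysis5.IVT_interv (fun t => t^2/2 - mass kappa t) x1 X) as [z [Hz Hgz]].
    + intros a Ha. apply continuity_pt_minus.
      apply derivable_continuous_pt. apply derivable_pt_div.
      apply derivable_pt_pow. apply derivable_pt_const. lra.
      apply continuity_pt_filterlim. apply (ex_derive_continuous (mass kappa)).
      eexists. apply (mass_deriv kappa Hcont Hex). lra.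
    + lra.
    + lra.
    + lra.
    + exists z. split. lra. unfold alpha.
      assert (mass kappa z = z^2/2) by lra. rewrite H0. field. lra.
Qed.
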